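(* Consider unconstrained liquidity ($K=m$), $n$ recommenders, $m$ borrowers, threshold $c\in[0,1]$, a prior $\mathcal D$ with full support, and the truncated Winkler mechanism with the weighted linear aggregator $B_q(\hat p_q)=\sum_{i\in N}w_i\hat p_{iq}$, where $w_i>0$ and $\sum_i w_i=1$. If $\max_i w_i<1-c$, then the mechanism is ex post individually rational and strictly interim incentive compatible. Moreover, the condition $\max_i w_i<1-c$ can hold only if $c<(n-1)/n$.
   Context: Setting: borrowers $M=\{1,\dots,m\}$, recommenders $N=\{1,\dots,n\}$; beliefs $p_{iq}\in[0,1]$, reports $\hat p_{iq}\in[0,1]$ made simultaneously; $p_{-i}$, $p_{-i,q}=(p_{jq})_{j\ne i}$ denote beliefs of others. Beliefs $p\sim\mathcal D$ on $[0,1]^{n\times m}$ (common knowledge), $\mathcal D_{-i}$ the marginal of $p_{-i}$; full support means every nonempty relatively open subset of $[0,1]^{n\times m}$ has positive $\mathcal D$-probability. Outcomes $o_q\in\{0,1\}$. A mechanism makes loan decisions $x_q(\hat p)\in\{0,1\}$, charges immediate payment $t_i(\hat p)$ made by $i$, pays $s_{iq}(\hat p_{iq},o_q)$ to $i$ for each loaned $q$; $U_i(p_i,\hat p_i,\hat p_{-i})=\sum_{q:x_q(\hat p)=1}(p_{iq}s_{iq}(\hat p_{iq},1)+(1-p_{iq})s_{iq}(\hat p_{iq},0))-t_i(\hat p)$. Truncated Winkler mechanism: $x_q(\hat p)=1$ iff $B_q(\hat p_q)>c$; no immediate payment; for loaned $q$, $s^W_{iq}(\hat p_{iq},1)=\frac{\ln\hat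 p_{iq}-\ln c_{iq}}{-\ln c_{iq}}$, $s^W_{iq}(\hat p_{iq},0)=\frac{\ln(1-\hat p_{iq})-\ln(1-c_{iq})}{-\ln c_{iq}}$ (conventions $\ln0=-\infty$, $0\cdot(-\infty)=0$), where $c_{iq}=\inf\{p'\in[0,1]:B_q(p',\hat p_{-i,q})>c\}$, which for the linear aggregator equals $\min\big(1,\max\big(0,\frac1{w_i}(c-\sum_{j\ne i}w_j\hat p_{jq})\big)\big)$. Ex post individually rational: $U_i(p_i,p_i,\hat p_{-i})\ge 0$ for all $i,p_i,\hat p_{-i}$. Strictly interim incentive compatible: for all $i$, all $p_i$, all $\hat p_i\ne p_i$, $\mathbb E_{p_{-i}\sim\mathcal D_{-i}}[U_i(p_i,p_i,p_{-i})]>\mathbb E_{p_{-i}\sim\mathcal D_{-i}}[U_i(p_i,\hat p_i,p_{-i})]$. *)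

(* Defs.v *)
From HB Require Import structures.
From mathcomp Require Import all_boot all_order all_algebra.
From mathcomp Require Import all_classical all_reals all_analysis.

Set Implicit Arguments.
Unset Strict Implicit.
Unset Printing Implicit Defensive.

Import Order.TTheory GRing.Theory Num.Theory.
Import numFieldNormedType.Exports.

Local Open Scope classical_set_scope.
Local Open Scope ring_scope.

Section LoanDefs.
Variable R : realType.

(* Belief / report profiles: an n x m matrix, entry (i,q) = p_{iq}.
   Recommenders are 'I_n, borrowers are 'I_m. *)

Definition BeliefSpace (n m : nat) :=
  g_sigma_algebraType (@open 'M[R]_(n, m)).

Definition unitbox (n m : nat) : set 'M[R]_(n, m) :=
  [set P | forall i q, 0 <= P i q <= 1].
Arguments unitbox : clear implicits.


Definition unitrow (m : nat) : set 'rV[R]_m :=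
  [set r | forall q, 0 <= r ord0 q <= 1].

Definition full_support (n m : nat) (D : probability (BeliefSpace n m) R) :=
  forall U : set 'M[R]_(n, m), open U ->
    (U `&` unitbox n m) !=set0 -> (0 < D (U `&` unitbox n m))%E.

Definition with_row (n m : nat) (i : 'I_n) (r : 'rV[R]_m) (P : 'M[R]_(n, m))
  : 'M[R]_(n, m) := \matrix_(j, q) if j == i then r ord0 q else P j q.

Definition agg (n m : nat) (w : 'I_n -> R) (P : 'M[R]_(n, m)) (q : 'I_m) : R :=
  \sum_(j < n) w j * P j q.

(* loan decision x_q(p) = 1 iff B_q(p_q) > c  (unconstrained liquidity K = m) *)
Definition loan (n m : nat) (c : R) (w : 'I_n -> R) (P : 'M[R]_(n, m))
  (q : 'I_m) : bool := c < agg w P q.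

(* critical report c_iq = inf {p' in [0,1] : B_q(p', p_{-i,q}) > c},
   which for the linear aggregator equals
   min(1, max(0, (c - sum_{j<>i} w_j p_jq) / w_i)) *)
Definition crit (n m : nat) (c : R) (w : 'I_n -> R) (P : 'M[R]_(n, m))
  (i : 'I_n) (q : 'I_m) : R :=
  Num.min 1 (Num.max 0 ((c - \sum_(j < n | j != i) w j * P j q) / w i)).

Definition eln (x : R) : \bar R := if x <= 0 then -oo%E else (ln x)%:E.

Definition winkler1 (ph ci : R) : \bar R :=
  if (0 < ci) && (ci < 1) then
    ((eln ph - (ln ci)%:E) * ((- ln ci)^-1)%:E)%E
  else 0%E.

Definition winkler0 (ph ci : R) : \bar R :=
  if (0 < ci) && (ci < 1) then
    ((eln (1 - ph) - (ln (1 - ci))%:E) * ((- ln ci)^-1)%:E)%E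
  else 0%E.

(* U_i(p_i, ph_i, ph_{-i}) for the truncated Winkler mechanism (no immediate
   payment, t_i = 0).  P provides the reports of the others (its row i is
   ignored). *)
Definition utility (n m : nat) (c : R) (w : 'I_n -> R) (i : 'I_n)
  (pi ph : 'rV[R]_m) (P : 'M[R]_(n, m)) : \bar R :=
  let Ph := with_row i ph P in
  (\sum_(q < m | loan c w Ph q)
     ((pi ord0 q)%:E * winkler1 (ph ord0 q) (crit c w Ph i q)
      + (1 - pi ord0 q)%:E * winkler0 (ph ord0 q) (crit c w Ph i q)))%E.

Definition interim_utility (n m : nat) (D : probability (BeliefSpace n m) R)
  (c : R) (w : 'I_n -> R) (i : 'I_n) (pi ph : 'rV[R]_m) : \bar R :=
  (\int[D]_(P in unitbox n m) utility c w i pi ph P)%E.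

Definition ex_post_IR (n m : nat) (c : R) (w : 'I_n -> R) :=
  forall (i : 'I_n) (pi : 'rV[R]_m) (P : 'M[R]_(n, m)),
    unitrow pi -> unitbox n m P -> (0 <= utility c w i pi pi P)%E.

Definition strictly_interim_IC (n m : nat) (D : probability (BeliefSpace n m) R)
  (c : R) (w : 'I_n -> R) :=
  forall (i : 'I_n) (pi ph : 'rV[R]_m),
    unitrow pi -> unitrow ph -> ph != pi ->
    (interim_utility D c w i pi ph < interim_utility D c w i pi pi)%E.

End LoanDefs.
Arguments unitbox R n m : clear implicits.
Arguments ex_post_IR {R} n m c w.
Arguments strictly_interim_IC {R n m} D c w.
Arguments full_support {R n m} D.

(* Main.v *)
Require Import Defs.
From HB Require Import structures.
From mathcomp Require Import all_boot all_order all_algebra.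
From mathcomp Require Import all_classical all_reals all_analysis.
From mathcomp Require Import measurable_realfun ring lra.
Set Implicit Arguments.
Unset Strict Implicit.
Unset Printing Implicit Defensive.
Import Order.TTheory GRing.Theory Num.Theory.
Import numFieldNormedType.Exports.
Local Open Scope classical_set_scope.
Local Open Scope ring_scope.
Section Real.
Variable R : realType.
Implicit Types a b x y : R.

Lemma ln_le_sub1 y : 0 < y -> ln y <= y - 1.
Proof.
move=> y0; have := expR_ge1Dx (ln y); rewrite lnK ?posrE //; lra.
Qed.

Lemma ln_lt_sub1 y : 0 < y -> y != 1 -> ln y < y - 1.
Proof.
move=> y0 y1; have : ln y != 0.
  apply: contra y1 => /eqP h; by rewrite -(lnK (x:=y)) ?posrE // h expR0.
move=> /expR_gt1Dx; rewrite lnK ?posrE //; lra.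
Qed.

Lemma key_bound a b x : 0 < x < 1 -> 0 <= a <= 1 -> 0 < b < 1 ->
  a * (ln b - ln x) + (1 - a) * (ln (1 - b) - ln (1 - x))
  <= (b - x) * (a - x) / (x * (1 - x)).
Proof.
move=> /andP[x0 x1] /andP[a0 a1] /andP[b0 b1].
have h1 : ln b - ln x <= b / x - 1.
  rewrite -ln_div ?posrE //; apply: ln_le_sub1; exact: divr_gt0.
have h2 : ln (1 - b) - ln (1 - x) <= (1 - b) / (1 - x) - 1.
  rewrite -ln_div ?posrE ?subr_gt0 //; apply: ln_le_sub1; apply: divr_gt0; lra.
have e : (b - x) * (a - x) / (x * (1 - x)) =
   a * (b / x - 1) + (1 - a) * ((1 - b) / (1 - x) - 1).
  field; apply/andP; split; rewrite ?subr_eq0; apply/negP => /eqP; lra.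
rewrite e lerD //; [apply: ler_wpM2l|apply: ler_wpM2l] => //; lra.
Qed.

Lemma gibbs_lt a b : 0 < a < 1 -> 0 < b < 1 -> b != a ->
  a * ln b + (1 - a) * ln (1 - b) < a * ln a + (1 - a) * ln (1 - a).
Proof.
move=> /andP[a0 a1] /andP[b0 b1] ba.
have h1 : a * (ln b - ln a) < a * (b / a - 1).
  rewrite ltr_pM2l // -ln_div ?posrE //; apply: ln_lt_sub1; first exact: divr_gt0.
  apply: contra ba => /eqP h; apply/eqP.
  by rewrite -[b](@divfK _ a) ?h ?mul1r // gt_eqF.
have h2 : (1 - a) * (ln (1 - b) - ln (1 - a)) <= (1 - a) * ((1 - b) / (1 - a) - 1).
  rewrite ler_pM2l ?subr_gt0 // -ln_div ?posrE ?subr_gt0 //.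
  apply: ln_le_sub1; apply: divr_gt0; lra.
have e1 : a * (b / a - 1) = b - a by field; rewrite gt_eqF.
have e2 : (1 - a) * ((1 - b) / (1 - a) - 1) = a - b.
  field; rewrite subr_eq0; apply/negP => /eqP; lra.
rewrite e1 in h1; rewrite e2 in h2.
have := ltr_leD h1 h2; lra.
Qed.


Definition gsc a b x : R :=
  (a * (ln b - ln x) + (1 - a) * (ln (1 - b) - ln (1 - x))) / (- ln x).

Lemma Lpos x : 0 < x < 1 -> 0 < - ln x.
Proof. by move=> hx; rewrite oppr_gt0 ln_lt0. Qed.

Lemma gsc_aa_gt0 a x : 0 < x < 1 -> 0 < a < 1 -> x != a -> 0 < gsc a a x.
Proof.
move=> hx ha xa; have L0 := Lpos hx.
have := gibbs_lt ha hx xa; rewrite /gsc => h.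
apply: divr_gt0 => //; lra.
Qed.

Lemma gsc_aa_le1 a x : 0 < x -> x < a -> a < 1 -> gsc a a x <= 1.
Proof.
move=> x0 xa a1; have hx : 0 < x < 1 by apply/andP; split => //; lra.
have L0 := Lpos hx.
have la : ln a <= 0 by apply: ln_le0; lra.
have l1 : ln (1 - a) <= ln (1 - x) by rewrite ler_ln ?posrE; lra.
rewrite /gsc ler_pdivrMr // mul1r.
have : 0 <= a by lra.
have : 1 - a >= 0 by lra.
nra.
Qed.

Lemma gsc_1b a b x : 0 < x < 1 -> 0 < b <= 1 -> a = 1 -> gsc a b x <= 1.
Proof.
move=> hx /andP[b0 b1] ->; have L0 := Lpos hx.
have lb : ln b <= 0 by apply: ln_le0.
rewrite /gsc ler_pdivrMr // mul1r; lra.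
Qed.

Lemma gsc_1b_lt a b x : 0 < x < 1 -> 0 < b < 1 -> a = 1 -> gsc a b x < 1.
Proof.
move=> hx /andP[b0 b1] ->; have L0 := Lpos hx.
have lb : ln b < 0 by apply: ln_lt0; lra.
rewrite /gsc ltr_pdivrMr // mul1r; lra.
Qed.

Lemma gsc_ab_lt a b x : 0 < x < 1 -> 0 < a < 1 -> 0 < b < 1 -> b != a ->
  gsc a b x < gsc a a x.
Proof.
move=> hx ha hb ba; have L0 := Lpos hx.
have := gibbs_lt ha hb ba; rewrite /gsc => h.
rewrite ltr_pM2r ?invr_gt0 //; lra.
Qed.

Lemma gsc_ab_le a b x : 0 < x < 1 -> 0 < a < 1 -> 0 < b < 1 ->
  gsc a b x <= gsc a a x.
Proof.
move=> hx ha hb; have [->|ba] := eqVneq b a; first exact: lexx.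
exact/ltW/gsc_ab_lt.
Qed.

Lemma gsc_dev_le a b x : 0 < x < 1 -> 0 <= a <= x -> x < b < 1 -> gsc a b x <= 0.
Proof.
move=> hx /andP[a0 ax] /andP[xb b1]; have L0 := Lpos hx.
have hb : 0 < b < 1 by apply/andP; split; lra.
have ha : 0 <= a <= 1 by apply/andP; split; lra.
have := key_bound hx ha hb.
have : (b - x) * (a - x) / (x * (1 - x)) <= 0.
  rewrite pmulr_lle0 ?invr_gt0 ?mulr_gt0 //; [nra|lra..].
move=> h1 h2; rewrite /gsc pmulr_lle0 ?invr_gt0 //; lra.
Qed.

Lemma gsc_dev_lt a b x : 0 < x < 1 -> 0 <= a < x -> x < b < 1 -> gsc a b x < 0.
Proof.
move=> hx /andP[a0 ax] /andP[xb b1]; have L0 := Lpos hx.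
have hb : 0 < b < 1 by apply/andP; split; lra.
have ha : 0 <= a <= 1 by apply/andP; split; lra.
have := key_bound hx ha hb.
have : (b - x) * (a - x) / (x * (1 - x)) < 0.
  rewrite pmulr_llt0 ?invr_gt0 ?mulr_gt0 //; [nra|lra..].
move=> h1 h2; rewrite /gsc pmulr_llt0 ?invr_gt0 //; lra.
Qed.


Local Open Scope ereal_scope.
Definition Phi a b x : \bar R :=
  if [&& (0 < x)%R, (x < 1)%R & (x < b)%R] then
    (if (b < 1)%R then (gsc a b x)%:E else if a == 1%R then 1%:E else -oo)
  else 0.

Lemma Phi_aa a x : (0 <= a <= 1)%R -> 0 <= Phi a a x <= 1.
Proof.
move=> /andP[a0 a1]; rewrite /Phi.
case: ifP => [/and3P[x0 x1 xa]|_]; last by rewrite lexx lee01.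
case: ifP => [a1'|/negbT]; last by rewrite -leNgt => h; rewrite (_ : a == 1%R) ?lexx ?lee01 //; apply/eqP; lra.
rewrite !lee_fin; apply/andP; split; last exact: gsc_aa_le1.
apply/ltW/gsc_aa_gt0; rewrite ?x0 ?x1 ?lt_eqF //; apply/andP; split => //; lra.
Qed.

Lemma Phi_le a b x : (0 <= a <= 1)%R -> (0 <= b <= 1)%R -> Phi a b x <= Phi a a x.
Proof.
move=> ha hb; have /andP[P0 _] := Phi_aa x ha.
move: P0; rewrite /Phi.
case: (boolP [&& (0 < x)%R, (x < 1)%R & (x < b)%R]) => [/and3P[x0 x1 xb]|]; last first.
  by move=> _ ?.
have hx : (0 < x < 1)%R by rewrite x0 x1.
move: ha hb => /andP[a0 a1] /andP[b0 b1].
case: (ltP x a) => xa; rewrite x0 x1 /=.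
- case: ifP => [a1'|/negbT]; last rewrite -leNgt => a1'.
  + move=> _; case: ifP => [b1'|/negbT]; last rewrite -leNgt => b1'.
      rewrite lee_fin; apply: gsc_ab_le => //; apply/andP; split => //; lra.
    by rewrite (_ : (a == 1%R) = false) ?leNye //; apply/negbTE; rewrite neq_lt a1'.
  + have -> : a = 1%R by apply/eqP; rewrite eq_le a1 a1'.
    have e1 : (1%R == 1%R :> R) = true by exact: eqxx.
    rewrite e1 => _; case: ifP => [b1'|_]; last by [].
    rewrite lee_fin; apply: gsc_1b => //; apply/andP; split => //; lra.
- move=> _; case: ifP => [b1'|/negbT]; last rewrite -leNgt => b1'.
    rewrite lee_fin; apply: gsc_dev_le => //; apply/andP; split => //.
  by rewrite (_ : (a == 1%R) = false) ?leNye //; apply/negbTE; rewrite neq_lt; apply/orP; left; lra.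
Qed.

Lemma Phi_lt a b x : (0 <= a <= 1)%R -> (0 <= b <= 1)%R -> a != b ->
  (0 < x < 1)%R -> x != a -> (x < a)%R || (x < b)%R -> Phi a b x < Phi a a x.
Proof.
move=> /andP[a0 a1] /andP[b0 b1] ab /andP[x0 x1] xa xab; rewrite /Phi x0 x1 /=.
have hx : (0 < x < 1)%R by rewrite x0 x1.
have e1 : (1%R == 1%R :> R) = true by exact: eqxx.
case: (ltP x a) => xa'; case: (ltP x b) => xb' /=.
- case: ifP => [b1'|/negbT]; last rewrite -leNgt => b1'.
    case: ifP => [a1'|/negbT]; last rewrite -leNgt => a1'.
      rewrite lte_fin; apply: gsc_ab_lt => //; rewrite ?b1' ?a1' ?andbT; try lra.
    have -> : a = 1%R by apply/eqP; rewrite eq_le a1 a1'.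
    by rewrite e1 lte_fin; apply: gsc_1b_lt => //; apply/andP; split => //; lra.
  have eb : b = 1%R by apply/eqP; rewrite eq_le b1 b1'.
  have [a1'|a1'] := ltP a 1%R.
    by rewrite (_ : (a == 1%R) = false) ?ltNyr //; apply/negbTE; rewrite neq_lt a1'.
  by move: ab; rewrite eb (_ : a = 1%R) ?e1 //; apply/eqP; rewrite eq_le a1 a1'.
- case: ifP => [a1'|/negbT]; last rewrite -leNgt => a1'.
    by rewrite lte_fin; apply: gsc_aa_gt0 => //; rewrite ?a1' ?andbT //; lra.
  by rewrite (_ : a = 1%R) ?e1 ?lte01 //; apply/eqP; rewrite eq_le a1 a1'.
- have ax : (a < x)%R by rewrite lt_neqAle xa' andbT eq_sym.
  case: ifP => [b1'|/negbT]; last rewrite -leNgt => b1'.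
    by rewrite lte_fin; apply: gsc_dev_lt => //; apply/andP; split => //.
  by rewrite (_ : (a == 1%R) = false) ?ltNy0 //; apply/negbTE; rewrite neq_lt; apply/orP; left; lra.
- by move: xab; rewrite ltNge xa' ltNge xb'.
Qed.
End Real.
Section S.
Variable R : realType.
Local Open Scope ereal_scope.

Lemma strict_int d (T : measurableType d) (mu : probability T R)
  (B S : set T) (f g : T -> \bar R) (M : R) :
  measurable B -> measurable S -> S `<=` B -> 0 < mu S ->
  measurable_fun B f -> measurable_fun B g ->
  (forall x, B x -> f x <= g x) -> (forall x, B x -> 0 <= g x <= M%:E) ->
  (forall x, S x -> f x < g x) ->
  \int[mu]_(x in B) f x < \int[mu]_(x in B) g x.
Proof.
move=> mB mS SB muS mf mg fg gb fgS.
have M0 : (0 <= M)%R.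
  have [x Sx] : S !=set0.
    apply/set0P/negP => /eqP S0; move: muS; rewrite S0 measure0 ltxx //.
  by have /andP[g0 gM] := gb x (SB x Sx); rewrite -lee_fin (le_trans g0 gM).
pose F := fun x => maxe (f x) (-1)%:E.
have mF : measurable_fun B F by apply: measurable_maxe => //; exact: measurable_cst.
have Fg : forall x, B x -> F x <= g x.
  move=> x Bx; rewrite /F ge_max fg //=.
  by have /andP[g0 _] := gb x Bx; rewrite (le_trans _ g0) // lee_fin lerN10.
have Fb : forall x, B x -> `|F x| <= (M + 1)%:E.
  move=> x Bx; have FN1 : (-1)%:E <= F x by rewrite /F le_max lexx orbT.
  have /andP[_ gM] := gb x Bx.
  have FM : F x <= M%:E := le_trans (Fg x Bx) gM.
  have [F0|F0] := leP 0 (F x).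
    by rewrite gee0_abs // (le_trans FM) // lee_fin; lra.
  rewrite lte0_abs // leeNl (le_trans _ FN1) // lee_fin; lra.
have intb (h : T -> \bar R) : measurable_fun B h ->
    (forall x, B x -> `|h x| <= (M + 1)%:E) -> mu.-integrable B h.
  move=> mh hb; apply/integrableP; split => //.
  apply: (@le_lt_trans _ _ (\int[mu]_(x in B) cst (M + 1)%:E x)).
    apply: ge0_le_integral => //.
    by apply: measurableT_comp => //.
  rewrite integral_cst // -ge0_fin_numE; last by apply: mule_ge0 => //; rewrite lee_fin; lra.
  rewrite fin_numM // fin_num_measure //.
have iF := intb F mF Fb.
have FF x : B x -> F x \is a fin_num.
  move=> Bx; rewrite fin_numElt; apply/andP; split.
    by rewrite (@lt_le_trans _ _ (-1)%:E) ?ltNyr // /F le_max lexx orbT.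
  have /andP[_ gM] := gb x Bx.
  by rewrite (le_lt_trans (Fg x Bx)) // (le_lt_trans gM) // ltry.
have ig : mu.-integrable B g.
  apply: (intb g mg) => x Bx; have /andP[g0 gM] := gb x Bx.
  by rewrite gee0_abs // (le_trans gM) // lee_fin; lra.
have fF : \int[mu]_(x in B) f x <= \int[mu]_(x in B) F x.
  rewrite (integralE _ _ f) (integralE _ _ F); apply: leeB.
    apply: ge0_le_integral => //.
    - exact: measurable_funepos.
    - exact: measurable_funepos.
    - by move=> x _; rewrite !funeposE /F ge_max !le_max !lexx !orbT.
  apply: ge0_le_integral => //.
  - exact: measurable_funeneg.
  - exact: measurable_funeneg.
  - move=> x _; rewrite !funenegE /F ge_max; apply/andP; split; last first.
      by rewrite le_max lexx orbT.
    rewrite le_max; apply/orP; left; rewrite leeN2 le_max lexx //.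
apply: (le_lt_trans fF).
rewrite lt_neqAle (le_integral mB iF ig); last by move=> x /[!inE]; exact: Fg.
rewrite andbT; apply/negP => /eqP eFg.
have h0 : \int[mu]_(x in B) `|(g \- F) x| = 0.
  rewrite (eq_integral (fun x => (g \- F) x)); last first.
    move=> x /[!inE] Bx; rewrite gee0_abs // subre_ge0 ?Fg //.
    have /andP[g0 gM] := gb x Bx.
    by rewrite fin_numElt (lt_le_trans _ g0) ?ltNyr // (le_lt_trans gM) ?ltry.
  by rewrite integralB // eFg subee // integrable_fin_num.
have mgF : measurable_fun B (g \- F) by apply: emeasurable_funB.
have [N [mN N0 sN]] := (ae_eq_integral_abs mu mB mgF).1 h0.
have : mu S <= mu N.
  apply: le_measure => //; rewrite ?inE //.
  move=> x Sx; apply: sN => /= /(_ (SB x Sx)) /eqP.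
  have : 0 < g x - F x.
    rewrite sube_gt0 /F gt_max fgS //=.
    by have /andP[g0 _] := gb x (SB x Sx); rewrite (lt_le_trans _ g0) // lte_fin ltrN10.
  by move=> /gt_eqF ->.
by rewrite N0 leNgt muS.
Qed.
End S.

Section Link.
Variable R : realType.
Variables (n m : nat) (c : R) (w : 'I_n -> R) (i : 'I_n).
Hypothesis wi0 : 0 < w i.

Definition srest (P : 'M[R]_(n, m)) (q : 'I_m) : R :=
  \sum_(j < n | j != i) w j * P j q.
Definition clw (s : R) : R := Num.min 1 (Num.max 0 ((c - s) / w i)).

Lemma agg_with_row (r : 'rV[R]_m) P q :
  agg w (with_row i r P) q = w i * r ord0 q + srest P q.
Proof.
rewrite /agg (bigD1 i) //= mxE eqxx; congr (_ + _).
by apply: eq_bigr => j ji; rewrite mxE (negbTE ji).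
Qed.

Lemma crit_with_row (r : 'rV[R]_m) P q :
  crit c w (with_row i r P) i q = clw (srest P q).
Proof.
rewrite /crit /clw /srest; congr (Num.min 1 (Num.max 0 ((c - _) / w i))).
by apply: eq_bigr => j ji; rewrite mxE (negbTE ji).
Qed.

Lemma clw_in s : 0 < clw s < 1 -> clw s = (c - s) / w i.
Proof.
rewrite /clw; set y := (c - s) / w i => /andP[h0 h1].
have [y0|y0] := leP y 0.
  by move: h0; rewrite (max_l y0) (min_r ler01) ltxx.
rewrite (max_r (ltW y0)) in h1 *.
have [y1|y1] := leP 1 y; first by move: h1; rewrite (min_l y1) ltxx.
by [].
Qed.

Local Open Scope ereal_scope.

Lemma term_eq (a b x : R) : (0 <= a <= 1)%R -> (0 < x < 1)%R -> (x < b)%R -> (b <= 1)%R ->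
  a%:E * winkler1 b x + (1 - a)%:E * winkler0 b x =
  (if (b < 1)%R then (gsc a b x)%:E else if a == 1%R then 1 else -oo).
Proof.
move=> /andP[a0 a1] hx xb b1; have L0 := Lpos hx.
move: (hx) => /andP[x0 x1].
rewrite /winkler1 /winkler0 hx /eln.
have b0 : (0 < b)%R by lra.
rewrite (_ : (b <= 0)%R = false); last by apply/negbTE; rewrite -ltNge.
have [b1'|b1'] := ltP b 1%R.
  rewrite (_ : (1 - b <= 0)%R = false); last by apply/negbTE; rewrite -ltNge; lra.
  rewrite -!EFinB -!EFinM -EFinD /gsc; congr (_%:E).
  ring.
have eb : b = 1%R by apply/eqP; rewrite eq_le b1 b1'.
rewrite eb subrr lexx ln1.
have e1 : ((0%:E - (ln x)%:E) * ((- ln x)^-1)%:E) = 1.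
  by rewrite -EFinB -EFinM sub0r divff // gt_eqF.
rewrite e1 mule1.
have e2 : (-oo - (ln (1 - x))%:E) * ((- ln x)^-1)%:E = -oo.
  by rewrite addNye mulNyr gtr0_sg ?invr_gt0 // mul1e.
rewrite e2.
have [a1'|a1'] := ltP a 1%R.
  rewrite (_ : (a == 1%R) = false); last by apply/negbTE; rewrite neq_lt a1'.
  by rewrite mulrNy gtr0_sg ?subr_gt0 // mul1e addeNy.
have -> : a = 1%R by apply/eqP; rewrite eq_le a1 a1'.
by rewrite subrr mul0e adde0 (_ : (1%R == 1%R :> R) = true) ?eqxx.
Qed.

Lemma util_eq (p r : 'rV[R]_m) P : unitrow p -> unitrow r ->
  utility c w i p r P = \sum_(q < m) Phi (p ord0 q) (r ord0 q) (clw (srest P q)).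
Proof.
move=> hp hr; rewrite /utility big_mkcond /=; apply: eq_bigr => q _.
rewrite /loan agg_with_row crit_with_row.
set s := srest P q; set x := clw s.
have := hp q; have := hr q => /andP[b0 b1] /andP[a0 a1].
case: (boolP ((0 < x) && (x < 1))%R) => hx.
  have ex : x = ((c - s) / w i)%R := clw_in hx.
  have -> : (c < w i * r ord0 q + s)%R = (x < r ord0 q)%R.
    by rewrite ex ltr_pdivrMr //; apply/idP/idP => h; lra.
  rewrite /Phi; move: (hx) => /andP[x0 x1]; rewrite x0 x1 /=.
  case: ifP => // xb; apply: term_eq => //; rewrite ?a0 ?a1 //.
rewrite /winkler1 /winkler0 (negbTE hx) !mule0 adde0 /Phi.
by move/negbTE: hx => hx; rewrite andbA hx /=; case: ifP.
Qed.
End Link.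

Section Meas.
Variable R : realType.
Variables (n m : nat).
Local Notation BS := (BeliefSpace R n m).

Lemma open_meas (U : set 'M[R]_(n, m)) : open U -> measurable (U : set BS).
Proof. by move=> oU; apply: sub_sigma_algebra. Qed.

Lemma cont_meas (phi : 'M[R]_(n, m) -> R) : continuous phi ->
  measurable_fun setT (phi : BS -> R).
Proof.
move=> cphi; apply: (measurability _ (RGenOpens.measurableE R)).
move=> _ [_ [a [b ->] <-]]; rewrite setTI; apply: open_meas.
move/continuousP: cphi; apply; exact: interval_open.
Qed.

Lemma coord_meas j q : measurable_fun setT (fun P : BS => P j q).
Proof. apply: cont_meas; exact: coord_continuous. Qed.

Lemma box_meas : measurable (unitbox R n m : set BS).
Proof.
have -> : unitbox R n m = \bigcap_(j in setT) \bigcap_(q in setT)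
    (setT `&` (fun P : BS => P j q) @^-1` `[0%R, 1%R]).
  apply/seteqP; split => P /=.
    by move=> h j _ q _; split => //=; rewrite in_itv /=; exact: h.
  by move=> h j q; have := h j I q I => -[_] /=; rewrite in_itv.
apply: fin_bigcap_measurable; first exact: finite_finset.
move=> j _; apply: fin_bigcap_measurable; first exact: finite_finset.
by move=> q _; apply: coord_meas => //; exact: measurable_itv.
Qed.

Lemma sum_cont (F : 'I_n -> 'M[R]_(n, m) -> R) (pr : pred 'I_n) :
  (forall j, continuous (F j)) -> continuous (fun P => \sum_(j < n | pr j) F j P).
Proof.
move=> hF.
suff h : forall s, continuous (fun P => \sum_(j <- s | pr j) F j P) by exact: h.
elim => [|j s IH].
  rewrite (_ : (fun P => _) = cst 0); first exact: cst_continuous.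
  by apply/funext => P; rewrite big_nil.
rewrite (_ : (fun P => _) = (fun P => (if pr j then F j P else 0) +
   \sum_(k <- s | pr k) F k P)); last first.
  by apply/funext => P; rewrite big_cons; case: ifP; rewrite ?add0r.
move=> P; apply: (@continuousD R R^o _ (fun P => if pr j then F j P else 0)
  (fun P => \sum_(k <- s | pr k) F k P)); last exact: IH.
by case: (pr j); [exact: hF|exact: cst_continuous].
Qed.
End Meas.

Section Meas2.
Variable R : realType.

Lemma inv_meas : measurable_fun setT (@GRing.inv R).
Proof.
have -> : [set: R] = [set 0] `|` [set x | x != 0].
  by apply/seteqP; split => x //= _; case: (eqVneq x 0) => h; [left|right].
apply/measurable_funU => //; first by apply: open_measurable; exact: open_neq.
split; first exact: measurable_fun_set1.
apply: open_continuous_measurable_fun; first exact: open_neq.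
by move=> x; rewrite inE => /= x0; exact: inv_continuous.
Qed.

Local Open Scope ereal_scope.
Lemma Phi_meas (a b : R) : measurable_fun setT (Phi a b).
Proof.
rewrite /Phi; apply: measurable_fun_ifT.
- apply: measurable_and; first by apply: measurable_fun_ltr => //.
  by apply: measurable_and; apply: measurable_fun_ltr.
- case: (b < 1)%R; last exact: measurable_cst.
  apply/measurable_EFinP; rewrite /gsc; apply: measurable_funM.
    apply: measurable_funD; apply: measurable_funM => //.
      apply: measurable_funB => //; exact: measurable_ln.
    apply: measurable_funB => //; apply: measurableT_comp; first exact: measurable_ln.
    exact: measurable_funB.
  apply: measurableT_comp; first exact: inv_meas.
  by apply: measurable_funN; exact: measurable_ln.
- exact: measurable_cst.
Qed.
End Meas2.

Section Final.
Variable R : realType.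
Variables (n m : nat) (c : R) (w : 'I_n -> R) (i : 'I_n).
Hypothesis wi0 : 0 < w i.

Lemma srest_cont q : continuous (fun P : 'M[R]_(n, m) => srest w i P q).
Proof.
rewrite /srest; apply: (@sum_cont R n m (fun j P => w j * P j q) (fun j => j != i)).
move=> j P.
have := (@continuousM R _ (fun _ => w j) (fun P : 'M[R]_(n,m) => P j q) P).
move=> /(_ (@cst_continuous _ _ (w j) P) (@coord_continuous R n m j q P)) h.
exact h.
Qed.

Lemma clw_meas : measurable_fun setT (clw c w i).
Proof.
rewrite /clw; apply: measurable_minr; first exact: measurable_cst.
apply: measurable_maxr; first exact: measurable_cst.
apply: measurable_funM => //; exact: measurable_funB.
Qed.

Local Open Scope ereal_scope.
Lemma util_meas (p r : 'rV[R]_m) : unitrow p -> unitrow r ->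
  measurable_fun setT (fun P : BeliefSpace R n m => utility c w i p r P).
Proof.
move=> hp hr.
rewrite (_ : (fun P => _) = (fun P => \sum_(q < m)
   Phi (p ord0 q) (r ord0 q) (clw c w i (srest w i P q)))); last first.
  by apply/funext => P; exact: util_eq.
apply: emeasurable_sum => q; apply: measurableT_comp; first exact: Phi_meas.
apply: measurableT_comp; first exact: clw_meas.
apply: cont_meas; exact: srest_cont.
Qed.
End Final.

Lemma part2 (R : realType) (n : nat) (c : R) (w : 'I_n -> R) :
  \sum_(i < n) w i = 1 -> (forall i, w i < 1 - c) -> c < (n%:R - 1) / n%:R.
Proof.
move=> sw hw; case: n w sw hw => [|k] w sw hw.
  by move: sw; rewrite big_ord0 => /eqP; rewrite eq_sym oner_eq0.
have : \sum_(i < k.+1) w i < \sum_(i < k.+1) (1 - c).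
  by apply: ltr_sum => //; apply/hasP; exists ord0 => //; rewrite mem_index_enum.
rewrite sw sumr_const card_ord => h.
have k0 : (0 : R) < k.+1%:R by rewrite ltr0n.
rewrite ltr_pdivlMr //.
move: h; rewrite -mulr_natr; nra.
Qed.

Unset Implicit Arguments.
Theorem corollary1 (R : realType) (n m : nat) (c : R) (w : 'I_n -> R) :
  0 <= c <= 1 ->
  (forall i, 0 < w i) -> \sum_(i < n) w i = 1 ->
  (* part 1: IR and strict interim IC *)
  (forall D : probability (BeliefSpace R n m) R,
     D (unitbox R n m) = 1%E -> full_support D ->
     0 < c ->
     (forall i, w i < 1 - c) ->
     ex_post_IR n m c w /\ strictly_interim_IC D c w) /\
  (* part 2: max_i w_i < 1 - c only if c < (n-1)/n *)
  ((forall i, w i < 1 - c) -> c < (n%:R - 1) / n%:R).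
Proof.
move=> /andP[c0 c1] w0 sw1; split; last exact: part2.
move=> D D1 fs cpos hw; split.
  move=> i p P hp hP; rewrite (util_eq c (w0 i) P hp hp).
  apply: sume_ge0 => q _.
  by have /andP[] := Phi_aa (clw c w i (srest w i P q)) (hp q).
move=> i p r hp hr rp; rewrite /interim_utility.
have [q0 hq0] : exists q, r ord0 q != p ord0 q.
  have : [exists q, r ord0 q != p ord0 q].
    apply: contraNT rp => /existsPn h; apply/eqP/matrixP => a q.
    by rewrite (ord1 a); move: (h q); rewrite negbK => /eqP.
  by move/existsP.
set a := p ord0 q0; set b := r ord0 q0.
have ha := hp q0; have hb := hr q0.
have ab : a != b by rewrite eq_sym.
set wi := w i; have wi0 : 0 < wi := w0 i; have wi1 : wi < 1 - c := hw i.
pose u := Num.min 1 (c / wi).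
have u0 : 0 < u by rewrite lt_min ltr01 divr_gt0.
have u1 : u <= 1 by rewrite ge_min lexx.
have uc : wi * u <= c.
  have : u <= c / wi by rewrite ge_min lexx orbT.
  by rewrite ler_pdivlMr // mulrC.
pose t := if a < b then (if 0 < a then Num.min u a else Num.min u b)
          else (if 0 < b then Num.min u b else Num.min u a).
have [t0 [tu tprop]] : 0 < t /\ t <= u /\
    (forall x, 0 < x < t -> (x != a) && ((x < a) || (x < b))).
  have /andP[a0 a1] : 0 <= a <= 1 by exact: ha.
  have /andP[b0 b1] : 0 <= b <= 1 by exact: hb.
  have tmin (v : R) : 0 < v -> 0 < Num.min u v /\ Num.min u v <= u /\ (forall x, x < Num.min u v -> x < v).
    move=> v0; split; first by rewrite lt_min u0.
    split; first by rewrite ge_min lexx.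
    by move=> x; rewrite lt_min => /andP[].
  rewrite /t; case: (ltP a b) => hab.
    case: (ltP 0 a) => ha0.
      have [T0 [TU h]] := tmin a ha0; split; first exact: T0; split; first exact: TU.
      by move=> x /andP[x0 /h xa]; rewrite xa lt_eqF.
    have [T0 [TU h]] := tmin b ltac:(lra); split; first exact: T0; split; first exact: TU.
    move=> x /andP[x0 /h xb].
    by rewrite xb orbT andbT; apply/negP => /eqP; lra.
  case: (ltP 0 b) => hb0.
    have [T0 [TU h]] := tmin b hb0; split; first exact: T0; split; first exact: TU.
    move=> x /andP[x0 /h xb].
    rewrite xb orbT andbT; apply/negP => /eqP; lra.
  have a0' : 0 < a.
    rewrite lt_neqAle a0 andbT; apply/negP => /eqP ea.
    by move: ab; rewrite -ea (_ : b = 0) ?eqxx //; apply/eqP; rewrite eq_le hb0 b0.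
  have [T0 [TU h]] := tmin a a0'; split; first exact: T0; split; first exact: TU.
  by move=> x /andP[x0 /h xa]; rewrite xa lt_eqF.
pose U := (fun P : 'M[R]_(n, m) => srest w i P q0) @^-1` `]c - wi * t, c[.
have oU : open U.
  by move: (@srest_cont R n m w i q0) => /continuousP; apply; exact: interval_open.
pose S := U `&` unitbox R n m.
have sw' : \sum_(j < n | j != i) w j = 1 - wi.
  by move: sw1; rewrite (bigD1 i) //= -/wi => h; lra.
have wt0 : 0 < wi * t by rewrite mulr_gt0.
have wtc : wi * t <= c by rewrite (le_trans _ uc) // ler_pM2l.
apply: (@strict_int R _ _ D (unitbox R n m) S _ _ m%:R).
- exact: box_meas.
- by apply: measurableI; [exact: open_meas|exact: box_meas].
- by move=> P [].
- apply: fs => //.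
  pose v := (c - wi * t / 2) / (1 - wi).
  have v0 : 0 <= v by rewrite divr_ge0 //; lra.
  have v1 : v <= 1 by rewrite ler_pdivrMr ?mul1r; lra.
  exists (const_mx v); split; last by move=> j q; rewrite mxE v0 v1.
  rewrite /U /= in_itv /=.
  have -> : srest w i (const_mx v) q0 = c - wi * t / 2.
    rewrite /srest; under eq_bigr do rewrite mxE.
    rewrite -big_distrl /= sw' /v; field; apply/negP => /eqP; lra.
  apply/andP; split; lra.
- by apply: measurable_funTS; exact: util_meas.
- by apply: measurable_funTS; exact: util_meas.
- move=> P _; rewrite !(util_eq c (w0 i) P hp) //.
  by apply: lee_sum => q _; apply: Phi_le; [exact: hp|exact: hr].
- move=> P _; rewrite (util_eq c (w0 i) P hp hp); apply/andP; split.
    by apply: sume_ge0 => q _; have /andP[] := Phi_aa (clw c w i (srest w i P q)) (hp q).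
  apply: (@le_trans _ _ (\sum_(q < m) (1%R)%:E)).
    by apply: lee_sum => q _; have /andP[] := Phi_aa (clw c w i (srest w i P q)) (hp q).
  by rewrite sumEFin sumr_const card_ord.
move=> P [UP BP]; rewrite !(util_eq c (w0 i) P hp) //.
rewrite [X in (X < _)%E](bigD1 q0) //= [X in (_ < X)%E](bigD1 q0) //=.
set x := clw c w i (srest w i P q0).
set s := srest w i P q0.
have /andP[s1 s2] : c - wi * t < s < c by move: UP; rewrite /U /= in_itv.
set y := (c - s) / wi.
have y0 : 0 < y by rewrite divr_gt0 //; lra.
have yt : y < t by rewrite ltr_pdivrMr // mulrC; lra.
have ex : x = y.
  rewrite /x /clw -/s -/y max_r ?ltW // min_r //; apply: ltW; lra.
have hxa := tprop y ltac:(by rewrite y0 yt).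
have fin : \sum_(q < m | q != q0) Phi (p ord0 q) (p ord0 q) (clw c w i (srest w i P q))
    \is a fin_num.
  apply/sum_fin_numP => q _ _.
  have /andP[g0 g1] := Phi_aa (clw c w i (srest w i P q)) (hp q).
  by rewrite fin_numElt (lt_le_trans _ g0) ?ltNyr // (le_lt_trans g1) ?ltry.
have hle : (\sum_(q < m | q != q0) Phi (p ord0 q) (r ord0 q) (clw c w i (srest w i P q))
   <= \sum_(q < m | q != q0) Phi (p ord0 q) (p ord0 q) (clw c w i (srest w i P q)))%E.
  by apply: lee_sum => q _; apply: Phi_le; [exact: hp|exact: hr].
apply: (le_lt_trans (leeD2l _ hle)).
apply: lte_leD => //.
rewrite ex; apply: Phi_lt => //; rewrite ?y0 /=; try lra.
by move/andP: hxa => [].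
by move/andP: hxa => [].
Qed.
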